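(* For a random threshold graph $G$ on $n\ge1$ vertices and an integer $k$ with $0\le k\le n/2$, the matching number $\nu(G)$ satisfies $$P(\nu(G)=k)=\begin{cases}\left(\tfrac12\right)^{n-1}\binom{n}{k} & k<\tfrac n2,\\[4pt] \left(\tfrac12\right)^{n-1}\binom{n-1}{\lfloor\frac{n-1}{2}\rfloor} & k=\tfrac n2.\end{cases}$$
   Context: A threshold graph on $n\ge1$ vertices is built from a base vertex $v_0$ by successively adding $v_1,\dots,v_{n-1}$, each either isolated (adjacent to no earlier vertex) or dominating (adjacent to all earlier vertices); its creation sequence $\mathrm{seq}(G)=s_1\cdots s_{n-1}$ has $s_i=1$ if $v_i$ is dominating and $s_i=0$ otherwise, and each unlabeled threshold graph on $n$ vertices corresponds to exactly one binary string of length $n-1$. A random threshold graph on $n$ vertices is one whose creation sequence is uniformly distributed over all $2^{n-1}$ binary strings of length $n-1$. $\nu(G)$ denotes the maximum number of edges in a matching of $G$. *)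

(* Defs.v *)
From mathcomp Require Import all_boot all_order all_algebra.
Set Implicit Arguments. Unset Strict Implicit. Unset Printing Implicit Defensive.

(* Threshold graph on vertices 'I_n = {v_0,...,v_(n-1)} from creation sequence
   s = s_1 ... s_(n-1), stored as a seq bool with s_i = nth false s (i-1).
   v_j (j >= 1) is dominating iff s_j = 1, i.e. adjacent to all v_i with i < j. *)
Definition thr_adj (n : nat) (s : seq bool) (i j : 'I_n) : bool :=
  ((i < j) && nth false s j.-1) || ((j < i) && nth false s i.-1).

Definition is_matching (n : nat) (adj : 'I_n -> 'I_n -> bool)
  (M : {set {set 'I_n}}) : bool :=
  [forall e in M, exists i, exists j, adj i j && (e == [set i; j])]
  && trivIset M.

Definition matching_number (n : nat) (adj : 'I_n -> 'I_n -> bool) : nat :=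
  \max_(M : {set {set 'I_n}} | is_matching adj M) #|M|.

Definition thr_nu (n : nat) (t : (n.-1).-tuple bool) : nat :=
  matching_number (thr_adj (n := n) t).

Definition prob_nu_eq (n k : nat) : rat :=
  (#|[set t : (n.-1).-tuple bool | thr_nu t == k]|%:R / (2 ^ n.-1)%:R)%R.

(* Main.v *)
Require Import Defs.
From mathcomp Require Import all_boot all_order all_algebra.
From mathcomp Require Import zify.

Definition step (p : nat * nat) (b : bool) : nat * nat :=
  if b && (0 < p.1)%N then (p.1.-1, p.2.+1) else (p.1.+1, p.2).

Lemma walk_inv (p : nat*nat) s :
  ((foldl step p s).1 + 2 * (foldl step p s).2 = p.1 + 2 * p.2 + size s)%N.
Proof.
elim: s p => [|b s IH] [f d] /=; first by rewrite addn0.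
rewrite IH /step /=; case: b => /=; case: f => [|f] /=; lia.
Qed.

Fixpoint allseq (L : nat) : seq (seq bool) :=
  if L is L'.+1 then [seq rcons s true | s <- allseq L'] ++
                     [seq rcons s false | s <- allseq L'] else [:: [::]].

Lemma mem_allseq L s : (s \in allseq L) = (size s == L).
Proof.
elim: L s => [|L IH] s /=.
  by rewrite inE; case: s.
case/lastP: s => [|s b]; rewrite mem_cat.
  apply/negbTE; rewrite negb_or; apply/andP; split; apply/mapP=> -[x _ /esym/eqP];
  by rewrite -size_eq0 size_rcons.
rewrite size_rcons eqSS -IH; case: b.
  rewrite (mem_map (@rcons_injl _ true)); case: (s \in _) => //=.
  by apply/negbTE/mapP => -[x _ /rcons_inj [] _].
rewrite (mem_map (@rcons_injl _ false)) orbC; case: (s \in _) => //=.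
by apply/negbTE/mapP => -[x _ /rcons_inj [] _].
Qed.

Lemma uniq_allseq L : uniq (allseq L).
Proof.
elim: L => [|L IH] //=.
rewrite cat_uniq !(map_inj_uniq (@rcons_injl _ _)) IH /= andbT.
apply/hasPn => x /mapP[s _ ->]; apply/mapP => -[y _ /rcons_inj [] _ //].
Qed.

Lemma card_tuple_count L (P : pred (seq bool)) :
  #|[set t : L.-tuple bool | P t]| = count P (allseq L).
Proof.
rewrite cardE size_filter -enumT.
rewrite (eq_count (a2 := P \o val)); last by move=> t; rewrite /= inE.
rewrite -count_map; have/permP -> // : perm_eq (map val (enum {: L.-tuple bool})) (allseq L); apply/uniq_perm.
- by rewrite map_inj_uniq ?enum_uniq //; apply: val_inj.
- exact: uniq_allseq.
move=> s; rewrite mem_allseq; apply/mapP/idP => [[t _ ->]|/eqP h].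
  by rewrite size_tuple.
by exists (Tuple (introT eqP h)); rewrite ?mem_enum.
Qed.

Definition W (s : seq bool) := foldl step (1%N, 0%N) s.
Definition D (s : seq bool) := (W s).2.
Definition cnt L k := count (fun s => D s == k) (allseq L).

Lemma count_split (T:eqType) (a b c : pred T) s :
  {in s, forall x, (a x : nat) = b x + c x} -> count a s = count b s + count c s.
Proof.
elim: s => //= x s IH H; rewrite H ?mem_head // IH; first by rewrite addnACA.
by move=> y ys; apply: H; rewrite inE ys orbT.
Qed.

Lemma stepT_eq L k (s : seq bool) : size s = L ->
  ((step (W s) true).2 == k : nat) =
  ((D s == k) && (k.*2 == L.+1)) + ((D s == k.-1) && (0 < k) && (k.-1.*2 < L.+1)).
Proof.
move=> hs; have := walk_inv (1%N,0%N) s; rewrite -/(W s) /D hs /=.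
case: (W s) => f d /= inv; rewrite /step /=.
case: f inv => [|f] inv /=;
  repeat (case: eqP => ? /=); repeat (case: ltnP => ? /=); lia.
Qed.

Lemma cnt_rec L k : cnt L.+1 k = cnt L k + (if k.*2 == L.+1 then cnt L k else 0)
  + (if (0 < k) && (k.-1.*2 < L.+1) then cnt L k.-1 else 0).
Proof.
rewrite /cnt /= count_cat !count_map.
have -> : count (preim (rcons^~ false) (fun s => D s == k)) (allseq L)
   = count (fun s => D s == k) (allseq L).
  by apply: eq_count => s; rewrite /= /D /W foldl_rcons.
rewrite addnC -addnA; congr (_ + _).
rewrite (count_split _ _ (fun s => (D s == k) && (k.*2 == L.+1))
   (fun s => (D s == k.-1) && (0 < k) && (k.-1.*2 < L.+1))); last first.
  move=> s; rewrite mem_allseq => /eqP hs; rewrite /= -stepT_eq //.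
  by rewrite /preim /D /W /= foldl_rcons.
congr (_ + _).
  by case: ifP => h; [apply: eq_count => s /=; rewrite andbT | rewrite (eq_count (a2 := pred0)) ?count_pred0 // => s /=; rewrite andbF].
by case: ifP => h; [apply: eq_count => s /=; rewrite -andbA h andbT | rewrite (eq_count (a2 := pred0)) ?count_pred0 // => s /=; rewrite -andbA h andbF].
Qed.

Definition A L k := if (k.*2 < L.+1)%N then 'C(L.+1, k)
  else if k.*2 == L.+1 then 'C(L, k.-1) else 0%N.

Lemma cnt_closed L k : cnt L k = A L k.
Proof.
elim: L k => [|L IH] k.
  by rewrite /cnt /= /D /W /A /=; case: k.
rewrite cnt_rec !IH /A.
case: k => [|k]; first by rewrite !bin0.
rewrite /= !doubleS.
have [h|h] := ltnP k.*2.+2 L.+1.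
  have e1 : (k.*2.+2 < L.+2) = true by lia.
  have e2 : (k.*2.+2 == L.+1) = false by apply/eqP; lia.
  have e3 : (k.*2 < L.+1) = true by lia.
  by rewrite ?e1 ?e2 ?e3 addn0 [RHS]binS.
have [e|ne] := eqVneq k.*2.+2 L.+1.
  have -> : L = k.*2.+1 by lia.
  have e1 : (k.*2.+2 < k.*2.+3) = true by lia.
  have e3 : (k.*2 < k.*2.+2) = true by lia.
  rewrite ?e1 ?e3 ?eqxx.
  rewrite (binS (k.*2.+2)) (binS (k.*2.+1)).
  have -> : 'C(k.*2.+1, k.+1) = 'C(k.*2.+1, k).
    by rewrite -(bin_sub (_ : k <= k.*2.+1)%N); [congr binomial; lia | lia].
  lia.
have [e2|ne2] := eqVneq k.*2.+2 L.+2.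
  have -> : L = k.*2 by lia.
  have e1 : (k.*2.+2 < k.*2.+2) = false by lia.
  have e3 : (k.*2.+2 == k.*2.+1) = false by apply/eqP; lia.
  have e4 : (k.*2 < k.*2.+1) = true by lia.
  by rewrite ?e1 ?e3 ?e4 ?eqxx.
have e1 : (k.*2.+2 < L.+2) = false by lia.
have e3 : (k.*2 < L.+1) = false by lia.
by rewrite ?e1 ?e3.
Qed.

Set Implicit Arguments. Unset Strict Implicit.

Lemma adj_irr n s (i : 'I_n) : thr_adj s i i = false.
Proof. by rewrite /thr_adj ltnn. Qed.

Lemma adj_sym n s (i j : 'I_n) : thr_adj s i j = thr_adj s j i.
Proof. by rewrite /thr_adj orbC. Qed.

Lemma adj_lt n s (i j : 'I_n) : i < j -> thr_adj s i j = nth false (false :: s) j.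
Proof.
move=> h; rewrite /thr_adj h /= (_ : (j < i) = false); last by apply/negbTE; lia.
by rewrite orbF; case: j h => [[|j] ?].
Qed.

Definition pre n m : {set 'I_n} := [set i : 'I_n | i < m].

Definition PM n (s : seq bool) m (M : {set {set 'I_n}}) :=
  is_matching (thr_adj s) M && (cover M \subset pre n m).
Arguments PM {n}.

Definition nuP n s m := \max_(M : {set {set 'I_n}} | PM s m M) #|M|.
Arguments nuP {n}.

Lemma edgeP n s (M : {set {set 'I_n}}) e : is_matching (thr_adj s) M -> e \in M ->
  exists i j, thr_adj s i j /\ e = [set i; j].
Proof.
case/andP => /forallP He _ eM; have /existsP[i /existsP[j /andP[a /eqP ->]]] := implyP (He e) eM.
by exists i, j.
Qed.

Lemma card_cover_matching n s (M : {set {set 'I_n}}) :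
  is_matching (thr_adj s) M -> #|cover M| = 2 * #|M|.
Proof.
move=> mM; have := mM; case/andP => _ /eqP <-.
rewrite (eq_bigr (fun _ => 2)); first by rewrite sum_nat_const mulnC.
move=> e eM.
have [i [j [a ->]]] := edgeP mM eM; rewrite cards2.
by case: eqP a => // ->; rewrite adj_irr.
Qed.

Lemma card_pre n m : m <= n -> #|pre n m| = m.
Proof.
move=> H; have -> : pre n m = [set widen_ord H i | i : 'I_m].
  apply/setP => x; rewrite inE; apply/idP/imsetP => [xm|[y _ ->]].
    by exists (Ordinal xm) => //; apply/val_inj.
  by rewrite /= ltn_ord.
rewrite card_imset ?card_ord // => a b /(congr1 val) /= ab; exact: val_inj.
Qed.

Lemma PM0 n s m : PM (n := n) s m set0.
Proof.
apply/andP; split; last by rewrite /cover big_set0 sub0set.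
apply/andP; split; first by apply/forallP => e; rewrite in_set0.
by rewrite /trivIset /cover !big_set0 cards0.
Qed.

Lemma nu_arg n s m : exists2 M, PM (n := n) s m M & nuP (n := n) s m = #|M|.
Proof.
by exists [arg max_(M > set0 | PM s m M) #|M|]; [case: arg_maxnP => //; apply: PM0 | apply: bigmax_eq_arg; apply: PM0].
Qed.

Lemma nu_le2 n s m : m <= n -> 2 * nuP (n := n) s m <= m.
Proof.
move=> mn; have [M /andP[mM sub] ->] := nu_arg n s m.
by rewrite -(card_cover_matching mM) -[X in _ <= X](card_pre mn) subset_leq_card.
Qed.

Lemma nu_mono n s m : nuP (n := n) s m <= nuP (n := n) s m.+1.
Proof.
apply/bigmax_leqP => M /andP[mM sub]; apply: leq_bigmax_cond; rewrite /PM mM /=.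
by apply: subset_trans sub _; apply/subsetP => x; rewrite !inE => /ltnW.
Qed.

Lemma vertex_bit n s m (hm : m < n) (M : {set {set 'I_n}}) e :
  PM s m.+1 M -> e \in M -> Ordinal hm \in e -> nth false (false :: s) m.
Proof.
case/andP => mM sub eM ve.
have [i [j [a ee]]] := edgeP mM eM.
have cov : forall x, x \in e -> x < m.+1.
  move=> x xe; have : x \in cover M by apply/bigcupP; exists e.
  by move/(subsetP sub); rewrite inE.
move: ve; rewrite ee => /set2P [vi|vj].
  have jm : j < m.+1 by apply: cov; rewrite ee set22.
  have jv : j != Ordinal hm by apply: contraTneq a => ->; rewrite -vi adj_irr.
  have jlt : j < m by move: jv; rewrite -val_eqE /=; lia.
  by move: a; rewrite -vi adj_sym adj_lt.
have im : i < m.+1 by apply: cov; rewrite ee set21.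
have iv : i != Ordinal hm by apply: contraTneq a => ->; rewrite -vj adj_irr.
have ilt : i < m by move: iv; rewrite -val_eqE /=; lia.
by move: a; rewrite -vj adj_lt.
Qed.

Lemma nu_step_le n s m (hm : m < n) :
  nuP (n:=n) s m.+1 <= nuP (n:=n) s m + nth false (false :: s) m.
Proof.
apply/bigmax_leqP => M PMm.
set v := Ordinal hm.
set X := [set e : {set 'I_n} | v \notin e].
rewrite -(cardsID X M).
apply: leq_add.
  apply: leq_bigmax_cond.
  case/andP: PMm => /andP[fa tr] sub.
  apply/andP; split; first (apply/andP; split).
  - apply/forallP => e; apply/implyP => /setIP[eM _]; exact: (implyP (forallP fa e) eM).
  - apply: trivIsetS tr; exact: subsetIl.
  apply/subsetP => x /bigcupP[e /setIP[eM]]; rewrite inE => ve xe.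
  have : x \in cover M by apply/bigcupP; exists e.
  move/(subsetP sub); rewrite !inE ltnS leq_eqVlt => /orP[/eqP xm|//].
  exfalso; move/negP: ve; apply; have -> : v = x by apply/val_inj.
  exact: xe.
case: (set_0Vmem (M :\: X)) => [->|[e0 e0M]]; first by rewrite cards0.
have e0v : v \in e0 by move: e0M; rewrite !inE negbK => /andP[].
have e0M' : e0 \in M by move: e0M; rewrite !inE => /andP[].
rewrite (vertex_bit PMm e0M' e0v).
apply: (@leq_trans #|[set e0]|); last by rewrite cards1.
apply: subset_leq_card; apply/subsetP => e eM'.
rewrite inE; move: eM'; rewrite !inE negbK => /andP[ve eM].
apply: contraT => ne; case/andP: PMm => /andP[_ /trivIsetP tr] _.
have := tr _ _ eM e0M' ne; rewrite -setI_eq0 => /eqP/setP/(_ v).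
by rewrite !inE ve e0v.
Qed.

Lemma nu_step_ge n s m (hm : m < n) : nth false (false :: s) m ->
  2 * nuP (n:=n) s m < m -> (nuP (n:=n) s m).+1 <= nuP (n:=n) s m.+1.
Proof.
move=> b lt.
have [M PMm eq] := nu_arg n s m; rewrite eq in lt *.
case/andP: PMm => mM sub.
have : ~~ (pre n m \subset cover M).
  apply/negP => /subset_leq_card; rewrite (card_pre (ltnW hm)) (card_cover_matching mM).
  by move: lt; lia.
case/subsetPn => u; rewrite inE => um uc.
set v := Ordinal hm.
have vc : v \notin cover M by apply/negP => /(subsetP sub); rewrite inE /= ltnn.
have uv : thr_adj s u v by rewrite adj_lt.
have disj : {in M, forall B : {set 'I_n}, [disjoint [set u; v] & B]}.
  move=> B BM; rewrite -setI_eq0; apply/eqP/setP => x; rewrite !inE.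
  apply/negbTE; apply/negP => /andP[/orP[/eqP->|/eqP->] xB].
    by move/negP: uc; apply; apply/bigcupP; exists B.
  by move/negP: vc; apply; apply/bigcupP; exists B.
have n0 : set0 \notin M.
  by apply/negP => /(edgeP mM) [i [j [_ /setP/(_ i)]]]; rewrite !inE eqxx.
case/andP: mM => fa trM.
case: (trivIsetU1 disj trM n0) => tr' notin.
have PM' : PM s m.+1 ([set u; v] |: M).
  apply/andP; split; first (apply/andP; split) => //.
    apply/forallP => e; apply/implyP => /setU1P[->|eM].
      by apply/existsP; exists u; apply/existsP; exists v; rewrite uv eqxx.
    exact: (implyP (forallP fa e) eM).
  apply/subsetP => x /bigcupP[B /setU1P[->|BM] xB].
    by move: xB; rewrite !inE => /orP[/eqP->|/eqP->] //=; apply: ltnW.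
  have : x \in cover M by apply/bigcupP; exists B.
  by move/(subsetP sub); rewrite !inE => /ltnW.
by apply: leq_trans (leq_bigmax_cond _ PM'); rewrite cardsU1 notin.
Qed.

Lemma nu_walk n (s : seq bool) m : size s = n.-1 -> m <= n ->
  nuP (n:=n) s m = (foldl step (0,0) (take m (false :: s))).2.
Proof.
move=> sz; elim: m => [|m IH] hm.
  have := nu_le2 (n:=n) s (leq0n n); rewrite take0 /=; lia.
rewrite (take_nth false); last by rewrite /= sz; lia.
rewrite foldl_rcons.
have inv := walk_inv (0,0) (take m (false :: s)).
rewrite size_takel in inv; last by rewrite /= sz; lia.
have IHm := IH (ltnW hm).
have le2 := nu_le2 s hm.
have mono := nu_mono n s m.
have stle := nu_step_le s hm.
have stge := nu_step_ge (s:=s) hm.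
move: inv IHm le2 mono stle stge.
case: (nth false (false :: s) m) => /=;
  case: (foldl step (0,0) (take m (false :: s))) => f d /= inv IHm le2 mono stle stge.
  rewrite /step /=; case: f inv => [|f] inv /=; first lia.
  have := stge isT; lia.
rewrite /step /=; lia.
Qed.

Lemma thr_nu_D n (t : (n.-1).-tuple bool) : (1 <= n)%N -> thr_nu t = D t.
Proof.
move=> n1; rewrite /thr_nu.
have -> : matching_number (thr_adj (n:=n) t) = nuP (n:=n) t n.
  rewrite /matching_number /nuP; apply: eq_bigl => M; rewrite /PM.
  by rewrite (_ : cover M \subset pre n n) ?andbT //; apply/subsetP => x _; rewrite inE ltn_ord.
rewrite nu_walk ?size_tuple // take_oversize //= size_tuple; lia.
Qed.

Import GRing.Theory Num.Theory.
Local Open Scope ring_scope.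

Theorem mainTheorem7 (n k : nat) (hn : (1 <= n)%N) (hk : (k.*2 <= n)%N) :
  prob_nu_eq n k =
  (if (k.*2 < n)%N then (1 / 2) ^+ n.-1 * ('C(n, k))%:R
   else (1 / 2) ^+ n.-1 * ('C(n.-1, n.-1./2))%:R).
Proof.
rewrite /prob_nu_eq.
have -> : [set t : (n.-1).-tuple bool | thr_nu t == k] = [set t : (n.-1).-tuple bool | D t == k].
  by apply/setP => t; rewrite !inE thr_nu_D.
rewrite (card_tuple_count (n.-1) (fun s => D s == k)) -/(cnt (n.-1) k) cnt_closed /A.
have e : n.-1.+1 = n by lia.
rewrite e natrX div1r exprVn.
case: ifP => h; first by rewrite mulrC.
have -> : k.*2 == n by apply/eqP; lia.
have -> : n.-1./2 = k.-1.
  have -> : n.-1 = (k.-1).*2.+1 by lia.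
  by rewrite /= uphalf_double.
by rewrite mulrC.
Qed.
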